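(* Fix a $C^0$-concept over $\mathbb{K}$. Let $E,F\in\mathcal{M}$, $U\subseteq E$ open, $n\in\mathbb{N}\cup\{\infty\}$, $f\colon U\to F$ of class $C^n$, $k\in\mathbb{N}$ with $k\le n$, and $x\in U$. Then $d^kf(x)\colon E^k\to F$ is a symmetric $\mathbb{K}$-multilinear $C^0$-map.
   Context: Let $\mathbb{K}$ be a commutative ring with unit carrying a topology. A $C^0$-concept over $\mathbb{K}$ consists of: (a) a class $\mathcal{M}$ of topologized $\mathbb{K}$-modules with $\mathbb{K}\in\mathcal{M}$; (b) for $E,F\in\mathcal{M}$ and open $U\subseteq E$, a set $C^0(U,F)$ of continuous maps; (c) for $E_1,E_2\in\mathcal{M}$ a topology on $E_1\times E_2$ (not necessarily the product topology) making it a member of $\mathcal{M}$ (finite products $E^k$ are formed iteratively); subject to: (I.1) composites of $C^0$-maps are $C^0$, identities and inclusions of open subsets are $C^0$; (I.2) $x\mapsto rx+b$ is $C^0$; (I.3) $t\mapsto tv+x$ is $C^0$; (I.4) $\mathbb{K}^\times$ is open and inversion is $C^0$; (I.5) $C^0$ is local on open covers; (II.1) projections and $v\mapsto(v,y)$, $w\mapsto(x,w)$ are $C^0$; (II.2) $f_1\times f_2$ is $C^0$ for $C^0$-maps $f_i$; (II.3) diagonals are $C^0$; (II.4) exchange/associativity maps of products are $C^0$ both ways; (II.5) addition and scalar multiplication are $C^0$; (III) a $C^0$-map on open $U\subseteq\mathbb{K}$ is determined by its values on $U\cap\mathbb{K}^\times$. For open $V\subseteq X$, $V^{[1]}=\{(x,v,t)\in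 V\times X\times\mathbb{K}:x+tv\in V\}$; a $C^0$-map $g$ is $C^1$ if there is a $C^0$-map $g^{[1]}$ on $V^{[1]}$ with $g(x+tv)-g(x)=t\,g^{[1]}(x,v,t)$; recursively $g$ is $C^{k+1}$ if $C^k$ and $g^{[k]}$ is $C^1$ with $g^{[k+1]}=(g^{[k]})^{[1]}$ on $V^{[k+1]}=(V^{[k]})^{[1]}$. For $g$ of class $C^1$, $\partial_vg(x):=g^{[1]}(x,v,0)$ (if $g$ is $C^m$ then $\partial_vg$ is $C^{m-1}$). For $f$ of class $C^n$ and $k\le n$, $d^kf(x)(v_1,\dots,v_k):=\partial_{v_1}\cdots\partial_{v_k}f(x)$. *)

(* Defs.v *)
From mathcomp Require Import all_boot all_algebra.
From mathcomp Require Import fingroup perm.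
From Stdlib Require Import ClassicalEpsilon.
Unset Printing Implicit Defensive.
Import GRing.Theory.
Local Open Scope ring_scope.

Record Top (T : Type) := MkTop {
  topen : (T -> Prop) -> Prop;
  topen_T : topen (fun _ => True);
  topen_I : forall A B, topen A -> topen B -> topen (fun x => A x /\ B x);
  topen_U : forall (I : Type) (A : I -> T -> Prop),
      (forall i, topen (A i)) -> topen (fun x => exists i, A i x) }.
Arguments topen {T} t A.

(* Topologized K-modules (no compatibility between topology and algebra). *)
Record TMod (K : comUnitRingType) := MkTMod {
  tcar :> lmodType K;
  ttop : Top tcar }.
Arguments MkTMod {K} tcar ttop.
Arguments tcar {K} t.
Arguments ttop {K} t.

Definition op (K : comUnitRingType) (E : TMod K) (A : E -> Prop) : Prop :=
  topen (ttop E) A.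
Arguments op {K E} A.

Definition Kmod (K : comUnitRingType) (tK : Top K) : TMod K :=
  @MkTMod K (K^o) tK.
Arguments Kmod {K} tK.

(* Data of a C^0-concept: the class M, the sets C^0(U,F) (maps U -> F are
   represented by total maps E -> F, only their values on U matter, see
   axiom c0_ext), and the chosen topologies on products. *)
Record C0Data (K : comUnitRingType) := MkC0Data {
  cM : TMod K -> Prop;
  cC0 : forall E F : TMod K, (E -> Prop) -> (E -> F) -> Prop;
  cptop : forall E1 E2 : TMod K, Top (E1 * E2)%type }.
Arguments cC0 {K} c E F _ _.
Arguments cM {K} c _.
Arguments cptop {K} c E1 E2.

Definition tprod (K : comUnitRingType) (D : C0Data K) (E1 E2 : TMod K)
  : TMod K := @MkTMod K (E1 * E2)%type (cptop D E1 E2).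
Arguments tprod {K} D E1 E2.

Record C0Concept (K : comUnitRingType) (tK : Top K) (D : C0Data K) : Prop := {
  cM_K : cM D (Kmod tK);
  c0_dom : forall (E F : TMod K) U f, cC0 D E F U f -> cM D E /\ cM D F /\ op U;
  c0_cont : forall (E F : TMod K) U f, cC0 D E F U f ->
      forall W : F -> Prop, op W -> op (fun x => U x /\ W (f x));
  c0_ext : forall (E F : TMod K) U (f g : E -> F), cC0 D E F U f ->
      (forall x, U x -> f x = g x) -> cC0 D E F U g;
  cM_prod : forall E1 E2, cM D E1 -> cM D E2 -> cM D (tprod D E1 E2);
  c0_comp : forall (E F G : TMod K) U W (f : E -> F) (g : F -> G),
      cC0 D E F U f -> cC0 D F G W g -> (forall x, U x -> W (f x)) ->
      cC0 D E G U (fun x => g (f x));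
  c0_id : forall (E : TMod K) U, cM D E -> op U -> cC0 D E E U (fun x => x);
  c0_affine : forall (E : TMod K) (r : K) (b : E), cM D E ->
      cC0 D E E (fun _ => True) (fun x => r *: x + b);
  c0_line : forall (E : TMod K) (v x : E), cM D E ->
      cC0 D (Kmod tK) E (fun _ => True) (fun t : K => t *: v + x);
  units_open : topen tK (fun t : K => t \is a GRing.unit);
  c0_inv : cC0 D (Kmod tK) (Kmod tK) (fun t : K => t \is a GRing.unit)
      (fun t : K => t^-1);
  c0_local : forall (E F : TMod K) (U : E -> Prop) (f : E -> F)
      (I : Type) (Ui : I -> E -> Prop),
      cM D E -> cM D F -> op U -> (forall i, op (Ui i)) ->
      (forall x, U x <-> exists i, Ui i x) ->
      (forall i, cC0 D E F (Ui i) f) -> cC0 D E F U f;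
  c0_fst : forall E1 E2, cM D E1 -> cM D E2 ->
      cC0 D (tprod D E1 E2) E1 (fun _ => True) (fun p => p.1);
  c0_snd : forall E1 E2, cM D E1 -> cM D E2 ->
      cC0 D (tprod D E1 E2) E2 (fun _ => True) (fun p => p.2);
  c0_inl : forall (E1 E2 : TMod K) (y : E2), cM D E1 -> cM D E2 ->
      cC0 D E1 (tprod D E1 E2) (fun _ => True) (fun v => (v, y));
  c0_inr : forall (E1 E2 : TMod K) (x : E1), cM D E1 -> cM D E2 ->
      cC0 D E2 (tprod D E1 E2) (fun _ => True) (fun w => (x, w));
  c0_pair : forall (E1 E2 F1 F2 : TMod K) U1 U2 (f1 : E1 -> F1) (f2 : E2 -> F2),
      cC0 D E1 F1 U1 f1 -> cC0 D E2 F2 U2 f2 ->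
      cC0 D (tprod D E1 E2) (tprod D F1 F2) (fun p => U1 p.1 /\ U2 p.2)
          (fun p => (f1 p.1, f2 p.2));
  c0_diag : forall E, cM D E ->
      cC0 D E (tprod D E E) (fun _ => True) (fun x => (x, x));
  c0_swap : forall E1 E2, cM D E1 -> cM D E2 ->
      cC0 D (tprod D E1 E2) (tprod D E2 E1) (fun _ => True) (fun p => (p.2, p.1));
  c0_assoc : forall E1 E2 E3, cM D E1 -> cM D E2 -> cM D E3 ->
      cC0 D (tprod D (tprod D E1 E2) E3) (tprod D E1 (tprod D E2 E3))
          (fun _ => True) (fun p => (p.1.1, (p.1.2, p.2)));
  c0_assocV : forall E1 E2 E3, cM D E1 -> cM D E2 -> cM D E3 ->
      cC0 D (tprod D E1 (tprod D E2 E3)) (tprod D (tprod D E1 E2) E3)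
          (fun _ => True) (fun p => ((p.1, p.2.1), p.2.2));
  c0_add : forall E, cM D E ->
      cC0 D (tprod D E E) E (fun _ => True) (fun p => p.1 + p.2);
  c0_scale : forall E, cM D E ->
      cC0 D (tprod D (Kmod tK) E) E (fun _ => True) (fun p => p.1 *: p.2);
  c0_unit_dense : forall (F : TMod K) (U : K -> Prop) (f g : K -> F),
      cC0 D (Kmod tK) F U f -> cC0 D (Kmod tK) F U g ->
      (forall t, U t -> t \is a GRing.unit -> f t = g t) ->
      forall t, U t -> f t = g t }.
Arguments C0Concept {K} tK D.

(* X^{[1]} = (X x X) x K as a member of M, points written ((x,v),t). *)
Definition tder1 (K : comUnitRingType) (tK : Top K) (D : C0Data K)
  (X : TMod K) : TMod K := tprod D (tprod D X X) (Kmod tK).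
Arguments tder1 {K} tK D X.

Definition sder1 (K : comUnitRingType) (tK : Top K) (D : C0Data K)
  (X : TMod K) (V : X -> Prop) : tder1 tK D X -> Prop :=
  fun p => V p.1.1 /\ V (p.1.1 + (p.2 : K) *: p.1.2).
Arguments sder1 {K} tK D {X} V _.

Definition is_der1 (K : comUnitRingType) (tK : Top K) (D : C0Data K)
  (X F : TMod K) (V : X -> Prop) (g : X -> F) (g1 : tder1 tK D X -> F) : Prop :=
  cC0 D (tder1 tK D X) F (sder1 tK D V) g1 /\
  forall p : tder1 tK D X, sder1 tK D V p ->
    g (p.1.1 + (p.2 : K) *: p.1.2) - g p.1.1 = (p.2 : K) *: g1 p.
Arguments is_der1 {K} tK D {X F} V g g1.

Definition isC1 (K : comUnitRingType) (tK : Top K) (D : C0Data K)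
  (X F : TMod K) (V : X -> Prop) (g : X -> F) : Prop :=
  cC0 D X F V g /\ exists g1, is_der1 tK D V g g1.
Arguments isC1 {K} tK D {X F} V g.

(* The map g^{[1]} (chosen; it is unique on V^{[1]} by axiom (III)). *)
Definition der1 (K : comUnitRingType) (tK : Top K) (D : C0Data K)
  (X F : TMod K) (V : X -> Prop) (g : X -> F) : tder1 tK D X -> F :=
  epsilon (inhabits (fun _ => 0)) (fun g1 => is_der1 tK D V g g1).
Arguments der1 {K} tK D {X F} V g _.

Fixpoint tderk (K : comUnitRingType) (tK : Top K) (D : C0Data K)
  (X : TMod K) (k : nat) : TMod K :=
  match k with 0 => X | k'.+1 => tder1 tK D (tderk K tK D X k') end.
Arguments tderk {K} tK D X k.

Fixpoint sderk (K : comUnitRingType) (tK : Top K) (D : C0Data K)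
  (X : TMod K) (V : X -> Prop) (k : nat) : tderk tK D X k -> Prop :=
  match k with 0 => V | k'.+1 => sder1 tK D (sderk K tK D X V k') end.
Arguments sderk {K} tK D {X} V k _.

Fixpoint derk (K : comUnitRingType) (tK : Top K) (D : C0Data K)
  (X F : TMod K) (V : X -> Prop) (g : X -> F) (k : nat) : tderk tK D X k -> F :=
  match k with
  | 0 => g
  | k'.+1 => der1 tK D (sderk tK D V k') (derk K tK D X F V g k')
  end.
Arguments derk {K} tK D {X F} V g k _.

Fixpoint isCk (K : comUnitRingType) (tK : Top K) (D : C0Data K)
  (X F : TMod K) (V : X -> Prop) (g : X -> F) (k : nat) : Prop :=
  match k with
  | 0 => cC0 D X F V g
  | k'.+1 => isCk K tK D X F V g k' /\ isC1 tK D (sderk tK D V k') (derk tK D V g k')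
  end.
Arguments isCk {K} tK D {X F} V g k.

Inductive natinf := NFin of nat | NInf.

Definition isCn (K : comUnitRingType) (tK : Top K) (D : C0Data K)
  (X F : TMod K) (V : X -> Prop) (g : X -> F) (n : natinf) : Prop :=
  match n with
  | NFin m => isCk tK D V g m
  | NInf => forall m, isCk tK D V g m
  end.
Arguments isCn {K} tK D {X F} V g n.

Definition le_natinf (k : nat) (n : natinf) : Prop :=
  match n with NFin m => (k <= m)%N | NInf => True end.

Definition partial (K : comUnitRingType) (tK : Top K) (D : C0Data K)
  (X F : TMod K) (V : X -> Prop) (v : X) (g : X -> F) : X -> F :=
  fun x => der1 tK D V g ((x, v), (0 : K^o)).
Arguments partial {K} tK D {X F} V v g _.

Fixpoint iter_partial (K : comUnitRingType) (tK : Top K) (D : C0Data K)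
  (X F : TMod K) (V : X -> Prop) (vs : seq X) (g : X -> F) : X -> F :=
  match vs with
  | [::] => g
  | v :: vs' => partial tK D V v (iter_partial K tK D X F V vs' g)
  end.
Arguments iter_partial {K} tK D {X F} V vs g _.

Definition dk (K : comUnitRingType) (tK : Top K) (D : C0Data K)
  (E F : TMod K) (U : E -> Prop) (f : E -> F) (k : nat) (x : E)
  (v : 'I_k -> E) : F :=
  iter_partial tK D U [seq v i | i <- enum 'I_k] f x.
Arguments dk {K} tK D {E F} U f k x v.

(* E^{m+1} as a member of M, formed iteratively: E^1 = E, E^{j+1} = E^j x E *)
Fixpoint tpow (K : comUnitRingType) (D : C0Data K) (E : TMod K) (m : nat)
  : TMod K :=
  match m with 0 => E | m'.+1 => tprod D (tpow K D E m') E end.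
Arguments tpow {K} D E m.

Fixpoint tpow_seq (K : comUnitRingType) (D : C0Data K) (E : TMod K) (m : nat)
  : tpow D E m -> seq E :=
  match m with
  | 0 => fun e => [:: e]
  | m'.+1 => fun p => rcons (tpow_seq K D E m' p.1) p.2
  end.
Arguments tpow_seq {K D E m} p.

Definition tpow_tuple (K : comUnitRingType) (D : C0Data K) (E : TMod K)
  (m : nat) (p : tpow D E m) : 'I_m.+1 -> E :=
  fun i => nth 0 (tpow_seq p) i.
Arguments tpow_tuple {K D E m} p i.

Definition multilinear_map (K : comUnitRingType) (E F : lmodType K) (k : nat)
  (phi : ('I_k -> E) -> F) : Prop :=
  forall (v : 'I_k -> E) (i : 'I_k) (a : K) (w w' : E),
    phi (fun j => if j == i then a *: w + w' else v j) =
    a *: phi (fun j => if j == i then w else v j) +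
    phi (fun j => if j == i then w' else v j).

Definition symmetric_map (K : comUnitRingType) (E F : lmodType K) (k : nat)
  (phi : ('I_k -> E) -> F) : Prop :=
  forall (s : 'S_k) (v : 'I_k -> E), phi (fun j => v (s j)) = phi v.
Arguments multilinear_map {K E F k} phi.
Arguments symmetric_map {K E F k} phi.

(* Main.v *)
Require Import Defs.
From mathcomp Require Import all_boot all_algebra.
From mathcomp Require Import fingroup perm.
From Stdlib Require Import ClassicalEpsilon FunctionalExtensionality PropExtensionality.
Set Implicit Arguments.
Unset Strict Implicit.
Unset Printing Implicit Defensive.
Import GRing.Theory.
Local Open Scope ring_scope.

Arguments cM_K {K tK D} _.
Arguments c0_dom {K tK D} _ {E F U f} _.
Arguments c0_cont {K tK D} _ {E F U f} _ {W} _.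
Arguments c0_ext {K tK D} _ {E F U f g} _ _.
Arguments cM_prod {K tK D} _ {E1 E2} _ _.
Arguments c0_comp {K tK D} _ {E F G U W f g} _ _ _.
Arguments c0_id {K tK D} _ {E U} _ _.
Arguments c0_affine {K tK D} _ {E} r b _.
Arguments c0_line {K tK D} _ {E} v x _.
Arguments units_open {K tK D} _.
Arguments c0_inv {K tK D} _.
Arguments c0_local {K tK D} _ {E F U f I Ui} _ _ _ _ _ _.
Arguments c0_fst {K tK D} _ {E1 E2} _ _.
Arguments c0_snd {K tK D} _ {E1 E2} _ _.
Arguments c0_inl {K tK D} _ {E1 E2} y _ _.
Arguments c0_inr {K tK D} _ {E1 E2} x _ _.
Arguments c0_pair {K tK D} _ {E1 E2 F1 F2 U1 U2 f1 f2} _ _.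
Arguments c0_diag {K tK D} _ {E} _.
Arguments c0_swap {K tK D} _ {E1 E2} _ _.
Arguments c0_add {K tK D} _ {E} _.
Arguments c0_scale {K tK D} _ {E} _.
Arguments c0_unit_dense {K tK D} _ {F U f g} _ _ _ t _.

Section Dev.
Context (K : comUnitRingType) (tK : Top K) (D : C0Data K) (HD : C0Concept tK D).

Notation KM := (Kmod tK).

Lemma set_eq (A B : TMod K) (W W' : A -> Prop) (g : A -> B) :
  (forall x, W x <-> W' x) -> cC0 D A B W g -> cC0 D A B W' g.
Proof.
move=> h; have -> : W' = W; last by [].
apply: functional_extensionality => x; apply: propositional_extensionality.
by split => /h.
Qed.

Lemma op_eq (A : TMod K) (W W' : A -> Prop) :
  (forall x, W x <-> W' x) -> op W -> op W'.
Proof.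
move=> h; have -> : W' = W; last by [].
apply: functional_extensionality => x; apply: propositional_extensionality.
by split => /h.
Qed.

Lemma restr (A B : TMod K) (W W' : A -> Prop) (g : A -> B) :
  cC0 D A B W g -> op W' -> (forall x, W' x -> W x) -> cC0 D A B W' g.
Proof.
move=> hg hW' hin; have [hA [hB hW]] := c0_dom HD hg.
exact: (c0_comp HD (c0_id HD hA hW') hg hin).
Qed.

Lemma opT (A : TMod K) : op (fun _ : A => True).
Proof. exact: topen_T. Qed.

Lemma op_pre (A B : TMod K) (W : B -> Prop) (g : A -> B) :
  cC0 D A B (fun _ => True) g -> op W -> op (fun x => W (g x)).
Proof.
move=> hg hW; apply: op_eq (c0_cont HD hg hW) => x; by split => [[]|].
Qed.

Lemma comp_pre (A B C : TMod K) (W : B -> Prop) (g : A -> B) (h : B -> C) :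
  cC0 D A B (fun _ => True) g -> cC0 D B C W h ->
  cC0 D A C (fun x => W (g x)) (fun x => h (g x)).
Proof.
move=> hg hh; have [_ [_ hW]] := c0_dom HD hh.
apply: (c0_comp HD _ hh) => //.
exact: restr hg (op_pre hg hW) _.
Qed.

Lemma compT (A B C : TMod K) (W : A -> Prop) (g : A -> B) (h : B -> C) :
  cC0 D A B W g -> cC0 D B C (fun _ => True) h ->
  cC0 D A C W (fun x => h (g x)).
Proof. by move=> hg hh; apply: (c0_comp HD hg hh). Qed.

Lemma cst (A B : TMod K) (c : B) : cM D A -> cM D B ->
  cC0 D A B (fun _ => True) (fun _ => c).
Proof.
move=> hA hB.
exact: (c0_comp HD (c0_inr HD c hB hA) (c0_fst HD hB hA)).
Qed.

Lemma cstW (A B : TMod K) (W : A -> Prop) (c : B) : cM D A -> cM D B -> op W ->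
  cC0 D A B W (fun _ => c).
Proof. by move=> hA hB hW; apply: restr (cst c hA hB) hW _. Qed.

Lemma idT (A : TMod K) : cM D A -> cC0 D A A (fun _ => True) (fun x => x).
Proof. by move=> hA; exact: (c0_id HD hA (opT A)). Qed.

Lemma pairf (A B C : TMod K) (W : A -> Prop) (g : A -> B) (h : A -> C) :
  cC0 D A B W g -> cC0 D A C W h ->
  cC0 D A (tprod D B C) W (fun x => (g x, h x)).
Proof.
move=> hg hh; have [hA [hB hW]] := c0_dom HD hg.
have hd := restr (c0_diag HD hA) hW (fun _ _ => I).
exact: (c0_comp HD hd (c0_pair HD hg hh)).
Qed.

Lemma fstf (A B C : TMod K) (W : A -> Prop) (g : A -> tprod D B C) :
  cM D B -> cM D C -> cC0 D A (tprod D B C) W g -> cC0 D A B W (fun x => (g x).1).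
Proof. by move=> hB hC hg; apply: compT hg (c0_fst HD hB hC). Qed.

Lemma sndf (A B C : TMod K) (W : A -> Prop) (g : A -> tprod D B C) :
  cM D B -> cM D C -> cC0 D A (tprod D B C) W g -> cC0 D A C W (fun x => (g x).2).
Proof. by move=> hB hC hg; apply: compT hg (c0_snd HD hB hC). Qed.

Lemma addf (A B : TMod K) (W : A -> Prop) (g h : A -> B) :
  cC0 D A B W g -> cC0 D A B W h -> cC0 D A B W (fun x => g x + h x).
Proof.
move=> hg hh; have [hA [hB hW]] := c0_dom HD hg.
exact: (compT (pairf hg hh) (c0_add HD hB)).
Qed.

Lemma scalef (A B : TMod K) (W : A -> Prop) (s : A -> KM) (g : A -> B) :
  cC0 D A KM W s -> cC0 D A B W g -> cC0 D A B W (fun x => (s x : K) *: g x).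
Proof.
move=> hs hg; have [hA [hB hW]] := c0_dom HD hg.
exact: (compT (pairf hs hg) (c0_scale HD hB)).
Qed.

Lemma cM_KM : cM D KM. Proof. exact: cM_K HD. Qed.

Lemma cM_der1 (X : TMod K) : cM D X -> cM D (tder1 tK D X).
Proof. by move=> hX; exact: (cM_prod HD (cM_prod HD hX hX) cM_KM). Qed.

Lemma cM_derk (X : TMod K) k : cM D X -> cM D (tderk tK D X k).
Proof. by move=> hX; elim: k => //= k IH; apply: cM_der1. Qed.

Lemma cM_pow (X : TMod K) m : cM D X -> cM D (tpow D X m).
Proof. by move=> hX; elim: m => //= m IH; exact: (cM_prod HD IH hX). Qed.

Lemma op_sder1 (X : TMod K) (V : X -> Prop) : cM D X -> op V -> op (sder1 tK D V).
Proof.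
move=> hX hV.
have hXX := cM_prod HD hX hX.
have hid := idT (cM_der1 hX).
have p1 := fstf hXX cM_KM hid.
have p11 := fstf hX hX p1. have p12 := sndf hX hX p1. have p2 := sndf hXX cM_KM hid.
have hm := addf p11 (scalef p2 p12).
have o1 := op_pre p11 hV. have o2 := op_pre hm hV.
exact: (topen_I _ _ _ _ o1 o2).
Qed.

Lemma der1_congr (X F : TMod K) (V : X -> Prop) (g g' : X -> F) :
  (forall y, V y -> g y = g' y) -> der1 tK D V g = der1 tK D V g'.
Proof.
move=> h; rewrite /der1.
have -> : (fun g1 => is_der1 tK D V g g1) = (fun g1 => is_der1 tK D V g' g1); last by [].
apply: functional_extensionality => g1; apply: propositional_extensionality.
rewrite /is_der1; split => -[hc he]; split => // p hp; case: (hp) => h1 h2.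
  by rewrite -(h _ h1) -(h _ h2); apply: he.
by rewrite (h _ h1) (h _ h2); apply: he.
Qed.

Lemma der1_spec (X F : TMod K) (V : X -> Prop) (g : X -> F) :
  (exists g1, is_der1 tK D V g g1) -> is_der1 tK D V g (der1 tK D V g).
Proof. move=> h; exact: (epsilon_spec (inhabits (fun _ => 0)) _ h). Qed.

Lemma scale_cancel (V : lmodType K) (t : K) (a b : V) :
  t \is a GRing.unit -> t *: a = t *: b -> a = b.
Proof.
move=> ht e.
by rewrite -[a]scale1r -(mulVr ht) -scalerA e scalerA mulVr // scale1r.
Qed.

Lemma der1_unique (X F : TMod K) (V : X -> Prop) (g : X -> F) g1 g2 p :
  cM D X -> is_der1 tK D V g g1 -> is_der1 tK D V g g2 -> sder1 tK D V p ->
  g1 p = g2 p.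
Proof.
move=> hX [c1 e1] [c2 e2] hp.
case: p hp => [[y v] t0] hp.
have hl : cC0 D KM (tder1 tK D X) (fun _ => True) (fun t => ((y, v), t)) :=
  c0_inr HD (E1 := tprod D X X) (E2 := KM) (y, v) (cM_prod HD hX hX) cM_KM.
have k1 := comp_pre hl c1. have k2 := comp_pre hl c2.
apply: (c0_unit_dense HD k1 k2 _ t0 hp) => t ht hu.
apply: (scale_cancel hu).
have E1 := e1 ((y, v), t) ht. have E2 := e2 ((y, v), t) ht.
by rewrite -E1 -E2.
Qed.

Lemma der1_eq (X F : TMod K) (V : X -> Prop) (g : X -> F) g1 p :
  cM D X -> is_der1 tK D V g g1 -> sder1 tK D V p -> der1 tK D V g p = g1 p.
Proof.
move=> hX h hp.
exact: (der1_unique hX (der1_spec (ex_intro _ g1 h)) h hp).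
Qed.

Lemma step (X F E : TMod K) (V : X -> Prop) (G : X -> F) G1 (U : E -> Prop)
  (A L : E -> X) (h : E -> F) :
  cM D X -> cM D E -> op U -> is_der1 tK D V G G1 ->
  (forall y (t : K) w, A (y + t *: w) = A y + t *: L w) ->
  cC0 D E X (fun _ => True) A -> cC0 D E X (fun _ => True) L ->
  (forall y, U y -> V (A y)) -> (forall y, U y -> h y = G (A y)) ->
  is_der1 tK D U h (fun p => G1 ((A p.1.1, L p.1.2), p.2)).
Proof.
move=> hX hE hU [c1 e1] hlin cA cL hAV hh; split.
- have hXX := cM_prod HD hE hE.
  have hid := idT (cM_der1 hE).
  have p1 := fstf hXX cM_KM hid.
  have p11 := fstf hE hE p1. have p12 := sndf hE hE p1.
  have p2 := sndf hXX cM_KM hid.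
  have cpsi : cC0 D (tder1 tK D E) (tder1 tK D X) (fun _ => True)
      (fun p => ((A p.1.1, L p.1.2), p.2)) :=
    pairf (pairf (compT p11 cA) (compT p12 cL)) p2.
  have := comp_pre cpsi c1.
  move/restr; apply; first exact: op_sder1 hE hU.
  move=> [[y w] t] [/= hy hyw]; split => /=; first exact: hAV.
  by rewrite -hlin; apply: hAV.
- move=> [[y w] t] [/= hy hyw].
  rewrite (hh _ hy) (hh _ hyw) hlin.
  apply: (e1 ((A y, L w), t)); split => /=; first exact: hAV.
  by rewrite -hlin; apply: hAV.
Qed.

Lemma step_partial (X F E : TMod K) (V : X -> Prop) (G : X -> F) G1 (U : E -> Prop)
  (A L : E -> X) (h : E -> F) :
  cM D X -> cM D E -> op U -> is_der1 tK D V G G1 ->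
  (forall y (t : K) w, A (y + t *: w) = A y + t *: L w) ->
  cC0 D E X (fun _ => True) A -> cC0 D E X (fun _ => True) L ->
  (forall y, U y -> V (A y)) -> (forall y, U y -> h y = G (A y)) ->
  forall y v, U y -> partial tK D U v h y = G1 ((A y, L v), 0).
Proof.
move=> hX hE hU hG hlin cA cL hAV hh y v hy.
rewrite /partial (der1_eq hE (step hX hE hU hG hlin cA cL hAV hh)) //.
by split => //=; rewrite scale0r addr0.
Qed.

Lemma pair_add (E1 E2 : TMod K) (a c : E1) (b d : E2) :
  ((a, b) + (c, d) : tprod D E1 E2) = (a + c, b + d).
Proof. by []. Qed.

Lemma pair_scale (E1 E2 : TMod K) (t : K) (a : E1) (b : E2) :
  (t *: (a, b) : tprod D E1 E2) = (t *: a, t *: b).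
Proof. by []. Qed.

Lemma comb4 (M : zmodType) (A B C Z : M) : (A - B) - (C - Z) = (A - C) - (B - Z).
Proof.
by rewrite !opprB !addrA [A - B + Z]addrAC [A - C + Z]addrAC addrAC.
Qed.

Lemma scal_swap (V : lmodType K) (a t : K) (w : V) : a *: (t *: w) = t *: (a *: w).
Proof. by rewrite !scalerA mulrC. Qed.

Lemma lin (E F : TMod K) (U : E -> Prop) (h : E -> F) h1 x (a : K) (w w' : E) :
  cM D E -> cM D F -> op U -> is_der1 tK D U h h1 -> U x ->
  h1 ((x, a *: w + w'), 0) = a *: h1 ((x, w), 0) + h1 ((x, w'), 0).
Proof.
move=> hE hF hU [c1 e1] hx.
have hEE := cM_prod HD hE hE.
have hP1 : cC0 D KM (tder1 tK D E) (fun _ => True) (fun t => ((x, a *: w + w'), t)) :=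
  c0_inr HD (E1 := tprod D E E) (E2 := KM) (x, a *: w + w') hEE cM_KM.
have hat : cC0 D KM KM (fun _ => True) (fun t : KM => (a * t : KM)).
  apply: (c0_ext HD (c0_affine HD a 0 cM_KM)) => t _; by rewrite addr0.
have hP2 : cC0 D KM (tder1 tK D E) (fun _ => True) (fun t => ((x, w), (a * t : KM))) :=
  pairf (cst (B := tprod D E E) (x, w) cM_KM hEE) hat.
have hl : cC0 D KM E (fun _ => True) (fun t : KM => x + (t : K) *: (a *: w)).
  apply: (c0_ext HD (c0_line HD (a *: w) x hE)) => t _; by rewrite addrC.
have hP3 : cC0 D KM (tder1 tK D E) (fun _ => True)
    (fun t => ((x + (t : K) *: (a *: w), w'), t)) :=
  pairf (pairf hl (cst w' cM_KM hE)) (idT cM_KM).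
have hS := op_sder1 hE hU.
pose W := fun t : KM => sder1 tK D U ((x, a *: w + w'), t) /\
   (sder1 tK D U ((x, w), (a * t : KM)) /\
    sder1 tK D U ((x + (t : K) *: (a *: w), w'), t)).
have hW : op W.
  apply: (topen_I _ _ _ _ (op_pre hP1 hS)).
  exact: (topen_I _ _ _ _ (op_pre hP2 hS) (op_pre hP3 hS)).
have k1 := restr (comp_pre hP1 c1) hW (fun t ht => ht.1).
have k2 := restr (comp_pre hP2 c1) hW (fun t ht => ht.2.1).
have k3 := restr (comp_pre hP3 c1) hW (fun t ht => ht.2.2).
have k23 := addf (scalef (cstW (B := KM) (a : KM) cM_KM cM_KM hW) k2) k3.
have h0 : W 0.
  rewrite /W /sder1 /= mulr0 !scale0r !addr0; by do ! split.
have := c0_unit_dense HD k1 k23 _ 0 h0.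
rewrite /= mulr0 scale0r addr0; apply => t [ht1 [ht2 ht3]] hu.
apply: (scale_cancel hu).
have E1 := e1 _ ht1. have E2 := e1 _ ht2. have E3 := e1 _ ht3.
rewrite /= in E1 E2 E3.
rewrite scalerDr scalerA [t * a]mulrC -E1 -E2 -E3.
rewrite -scalerA scal_swap scalerDr addrA.
by rewrite [X in _ = X]addrC addrA subrK.
Qed.

Definition Q (X : TMod K) (z a b : X) (t s : K) : tder1 tK D (tder1 tK D X) :=
  ((((z, a), (t : KM)), ((b, 0), (0 : KM))), (s : KM)).

Lemma Q_iff (X : TMod K) (V : X -> Prop) z a b t s :
  sder1 tK D (sder1 tK D V) (Q z a b t s) <->
  V z /\ V (z + t *: a) /\ V (z + s *: b) /\ V (z + s *: b + t *: a).
Proof.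
rewrite /Q /sder1 /= !scaler0 !addr0.
by split => [[[? ?] [? ?]]|[? [? [? ?]]]].
Qed.

Lemma der1_add (X : TMod K) (y w v u : X) (t r : K) :
  (((y, v), (t : KM)) + ((w, u), (r : KM)) : tder1 tK D X) = ((y + w, v + u), (t + r : KM)).
Proof. by []. Qed.

Lemma der1_scale (X : TMod K) (s : K) (y v : X) (t : K) :
  (s *: ((y, v), (t : KM)) : tder1 tK D X) = ((s *: y, s *: v), (s * t : KM)).
Proof. by []. Qed.

Ltac c0s := repeat first [ apply: idT | apply: cst | apply: pairf
  | apply: (cM_prod HD) | exact: cM_KM | assumption ].

Lemma schwarz (X F : TMod K) (V : X -> Prop) (G : X -> F) G1 G2 (z a b : X) :
  cM D X -> cM D F -> is_der1 tK D V G G1 ->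
  is_der1 tK D (sder1 tK D V) G1 G2 -> V z ->
  G2 (Q z a b 0 0) = G2 (Q z b a 0 0).
Proof.
move=> hX hF [c1 e1] [c2 e2] hz.
have key : forall t s : K, t \is a GRing.unit -> s \is a GRing.unit ->
    sder1 tK D (sder1 tK D V) (Q z a b t s) ->
    sder1 tK D (sder1 tK D V) (Q z b a s t) ->
    G2 (Q z a b t s) = G2 (Q z b a s t).
  move=> t s ht hs H1 H2.
  have E2a := e2 _ H1. have E2b := e2 _ H2.
  rewrite /Q /= der1_scale der1_add scaler0 mulr0 !addr0 in E2a.
  rewrite /Q /= der1_scale der1_add scaler0 mulr0 !addr0 in E2b.
  have [_ [hta [hsb hsbta]]] := (Q_iff V z a b t s).1 H1.
  have [_ [hsb' [hta' htasb]]] := (Q_iff V z b a s t).1 H2.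
  have E1a := e1 ((z, a), t) (conj hz hta).
  have E1b := e1 ((z + s *: b, a), t) (conj hsb hsbta).
  have E1c := e1 ((z, b), s) (conj hz hsb).
  have E1d := e1 ((z + t *: a, b), s) (conj hta htasb).
  rewrite /= in E1a E1b E1c E1d.
  have htsu : t * s \is a GRing.unit by rewrite unitrM ht hs.
  apply: (scale_cancel htsu).
  rewrite -scalerA /Q -E2a scalerBr -E1a -E1b.
  rewrite mulrC -scalerA -E2b scalerBr -E1c -E1d.
  by rewrite comb4 [z + t *: a + s *: b]addrAC.
have cQ1 : forall s : K, cC0 D KM (tder1 tK D (tder1 tK D X)) (fun _ => True)
    (fun t => Q z a b t s).
  by move=> s; rewrite /Q; c0s.
have cQ2 : forall s : K, cC0 D KM (tder1 tK D (tder1 tK D X)) (fun _ => True)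
    (fun t => Q z b a s t).
  by move=> s; rewrite /Q; c0s.
have cQ3 : cC0 D KM (tder1 tK D (tder1 tK D X)) (fun _ => True)
    (fun s => Q z a b 0 s).
  by rewrite /Q; c0s.
have cQ4 : cC0 D KM (tder1 tK D (tder1 tK D X)) (fun _ => True)
    (fun s => Q z b a s 0).
  by rewrite /Q; c0s.
have dom_eq : forall t s : K, sder1 tK D (sder1 tK D V) (Q z b a s t) <->
    sder1 tK D (sder1 tK D V) (Q z a b t s).
  move=> t s; rewrite !Q_iff [z + t *: a + s *: b]addrAC.
  by split => [[? [? [? ?]]]|[? [? [? ?]]]].
have step1 : forall s : K, s \is a GRing.unit ->
    sder1 tK D (sder1 tK D V) (Q z a b 0 s) ->
    G2 (Q z a b 0 s) = G2 (Q z b a s 0).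
  move=> s hs H0.
  have k1 := comp_pre (cQ1 s) c2.
  have k2 := set_eq (fun t : KM => dom_eq t s) (comp_pre (cQ2 s) c2).
  apply: (c0_unit_dense HD k1 k2 _ 0 H0) => t Ht hu.
  by apply: key => //; apply/dom_eq.
have k1 := comp_pre cQ3 c2.
have k2 := set_eq (fun s : KM => dom_eq 0 s) (comp_pre cQ4 c2).
have H00 : sder1 tK D (sder1 tK D V) (Q z a b 0 0).
  by apply/Q_iff; rewrite !scale0r !addr0.
exact: (c0_unit_dense HD k1 k2 (fun s Hs hu => step1 s hu Hs) 0 H00).
Qed.

Fixpoint Lk (E : TMod K) (k : nat) : E -> tderk tK D E k :=
  match k with
  | 0 => fun y => y
  | k'.+1 => fun y => ((Lk k' y, 0), (0 : KM))
  end.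

Lemma cLk (E : TMod K) k : cM D E -> cC0 D E (tderk tK D E k) (fun _ => True) (Lk k).
Proof.
move=> hE; elim: k => [|k IH] /=; first exact: idT.
have hk := cM_derk k hE.
exact: (pairf (pairf IH (cst (B := tderk tK D E k) 0 hE hk)) (cst (B := KM) 0 hE cM_KM)).
Qed.

Definition goodA (E : TMod K) (U : E -> Prop) k (A : E -> tderk tK D E k) :=
  [/\ forall y (t : K) w, A (y + t *: w) = A y + t *: Lk k w,
      cC0 D E (tderk tK D E k) (fun _ => True) A &
      forall y, U y -> sderk tK D U k (A y)].
Arguments goodA {E} U k A.

Lemma goodA_0 (E : TMod K) (U : E -> Prop) : cM D E -> goodA U 0 (fun y => y).
Proof. by move=> hE; split => //; exact: idT. Qed.

Lemma goodA_ext (E : TMod K) (U : E -> Prop) k A (v : E) : cM D E ->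
  goodA U k A -> goodA U k.+1 (fun y => ((A y, Lk k v), (0 : KM))).
Proof.
move=> hE [hl hc hm]; have hk := cM_derk k hE; split.
- move=> y t w /=; by rewrite der1_scale der1_add scaler0 mulr0 !addr0 hl.
- exact: (pairf (pairf hc (cst (B := tderk tK D E k) (Lk k v) hE hk)) (cst (B := KM) 0 hE cM_KM)).
- move=> y hy; split => /=; first exact: hm.
  by rewrite scale0r addr0; apply: hm.
Qed.

Lemma isCk_mono (E F : TMod K) (U : E -> Prop) (f : E -> F) m j :
  (j <= m)%N -> isCk tK D U f m -> isCk tK D U f j.
Proof.
elim: m j => [|m IH] j.
  by rewrite leqn0 => /eqP ->.
rewrite leq_eqVlt => /orP [/eqP -> //|hj] /= [h1 _].
exact: IH.
Qed.

Lemma der_rep (E F : TMod K) (U : E -> Prop) (f : E -> F) k A (h : E -> F) :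
  cM D E -> cM D F -> op U -> isCk tK D U f k.+1 -> goodA U k A ->
  (forall y, U y -> h y = derk tK D U f k (A y)) ->
  is_der1 tK D U h (fun p => derk tK D U f k.+1 ((A p.1.1, Lk k p.1.2), p.2)).
Proof.
move=> hE hF hU [_ [_ hC1]] [hl hc hm] hh.
have hd := der1_spec hC1.
exact: (step (cM_derk k hE) hE hU hd hl hc (cLk k hE) hm hh).
Qed.

Lemma partial_rep (E F : TMod K) (U : E -> Prop) (f : E -> F) k A (h : E -> F) v :
  cM D E -> cM D F -> op U -> isCk tK D U f k.+1 -> goodA U k A ->
  (forall y, U y -> h y = derk tK D U f k (A y)) ->
  forall y, U y -> partial tK D U v h y = derk tK D U f k.+1 ((A y, Lk k v), 0).
Proof.
move=> hE hF hU hC hA hh y hy.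
rewrite /partial (der1_eq hE (der_rep hE hF hU hC hA hh)) //.
by split => //=; rewrite scale0r addr0.
Qed.

Lemma iter_rep (E F : TMod K) (U : E -> Prop) (f : E -> F) vs :
  cM D E -> cM D F -> op U -> isCk tK D U f (size vs) ->
  exists A, goodA U (size vs) A /\
    forall y, U y -> iter_partial tK D U vs f y = derk tK D U f (size vs) (A y).
Proof.
move=> hE hF hU; elim: vs => [|v vs IH] /= hC.
  by exists (fun y => y); split => //; exact: goodA_0.
have [A [hA hr]] := IH hC.1.
exists (fun y => ((A y, Lk (size vs) v), (0 : KM))); split.
  exact: goodA_ext.
move=> y hy /=. exact: (partial_rep v hE hF hU hC hA hr hy).
Qed.

Lemma partial_congr (E F : TMod K) (U : E -> Prop) (g g' : E -> F) v :
  (forall y, U y -> g y = g' y) -> forall y, partial tK D U v g y = partial tK D U v g' y.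
Proof. by move=> h y; rewrite /partial (der1_congr h). Qed.

Lemma iter_congr (E F : TMod K) (U : E -> Prop) vs (g g' : E -> F) :
  (forall y, U y -> g y = g' y) ->
  forall y, U y -> iter_partial tK D U vs g y = iter_partial tK D U vs g' y.
Proof.
move=> h; elim: vs => [|v vs IH] y hy /=; first exact: h.
exact: partial_congr.
Qed.

Lemma swap2 (E F : TMod K) (U : E -> Prop) (f : E -> F) v w vs :
  cM D E -> cM D F -> op U -> isCk tK D U f (size vs).+2 ->
  forall y, U y ->
  iter_partial tK D U [:: v, w & vs] f y = iter_partial tK D U [:: w, v & vs] f y.
Proof.
move=> hE hF hU hC y hy.
have hC1 : isCk tK D U f (size vs).+1 := hC.1.
have hC0 : isCk tK D U f (size vs) := hC1.1.
have [A [hA hr]] := iter_rep hE hF hU hC0.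
have r1 := partial_rep w hE hF hU hC1 hA hr.
have r2 := partial_rep v hE hF hU hC1 hA hr.
have q1 := partial_rep v hE hF hU hC (goodA_ext w hE hA) r1.
have q2 := partial_rep w hE hF hU hC (goodA_ext v hE hA) r2.
rewrite /= q1 // q2 //.
have [hAy _] := (let: And3 _ _ hm := hA in conj (hm y hy) I).
have d1 := der1_spec hC1.2.2.
have d2 := der1_spec hC.2.2.
exact: (schwarz (Lk (size vs) w) (Lk (size vs) v) (cM_derk _ hE) hF d1 d2 hAy).
Qed.

Lemma move_front (E F : TMod K) (U : E -> Prop) (f : E -> F) ws1 v ws2 :
  cM D E -> cM D F -> op U -> isCk tK D U f (size (ws1 ++ v :: ws2)) ->
  forall y, U y ->
  iter_partial tK D U (ws1 ++ v :: ws2) f y = iter_partial tK D U (v :: ws1 ++ ws2) f y.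
Proof.
move=> hE hF hU; elim: ws1 => [|u ws1 IH] hC y hy //=.
have hC' : isCk tK D U f (size (ws1 ++ v :: ws2)) := isCk_mono (leqnSn _) hC.
rewrite (partial_congr _ (IH hC')).
have hs : size ((u :: ws1) ++ v :: ws2) = (size (ws1 ++ ws2)).+2.
  by rewrite /= !size_cat /= addnS.
rewrite hs in hC.
exact: (swap2 u v hE hF hU hC hy).
Qed.

Lemma perm_iter (E F : TMod K) (U : E -> Prop) (f : E -> F) vs ws :
  cM D E -> cM D F -> op U -> perm_eq vs ws -> isCk tK D U f (size vs) ->
  forall y, U y -> iter_partial tK D U vs f y = iter_partial tK D U ws f y.
Proof.
move=> hE hF hU; elim: vs ws => [|v vs IH] ws hp hC y hy.
  by move: (perm_size hp); case: ws {hp}.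
have hv : v \in ws by rewrite -(perm_mem hp) mem_head.
move: hp; case/splitPr: hv => ws1 ws2 hp.
have hmv : perm_eq (ws1 ++ v :: ws2) (v :: ws1 ++ ws2).
  by rewrite -[v :: ws2]cat1s -[v :: ws1 ++ ws2]cat1s perm_catCA.
have hp' : perm_eq vs (ws1 ++ ws2).
  by rewrite -(perm_cons v); apply: perm_trans hp hmv.
have hsz : size (ws1 ++ v :: ws2) = size (v :: vs) by rewrite (perm_size hp).
rewrite (move_front hE hF hU _ hy); last by rewrite hsz.
rewrite /=; apply: partial_congr => z hz.
exact: (IH _ hp' hC.1 z hz).
Qed.

Fixpoint Psi (E : TMod K) (y : E) (m : nat) : tpow D E m -> tderk tK D E m.+1 :=
  match m return tpow D E m -> tderk tK D E m.+1 with
  | 0 => fun p => ((y, p), (0 : KM))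
  | m'.+1 => fun p => ((@Psi E y m' p.1, Lk m'.+1 p.2), (0 : KM))
  end.

Arguments Psi {E} y m _.

Lemma goodA_Psi (E : TMod K) (U : E -> Prop) m (p : tpow D E m) :
  cM D E -> goodA U m.+1 (fun y => Psi y m p).
Proof.
move=> hE; elim: m p => [|m IH] p.
  exact: (goodA_ext p hE (goodA_0 U hE)).
exact: (goodA_ext p.2 hE (IH p.1)).
Qed.

Lemma rep_Psi (E F : TMod K) (U : E -> Prop) (f : E -> F) m (p : tpow D E m) :
  cM D E -> cM D F -> op U -> isCk tK D U f m.+1 ->
  forall y, U y ->
  iter_partial tK D U (rev (tpow_seq p)) f y = derk tK D U f m.+1 (Psi y m p).
Proof.
move=> hE hF hU; elim: m p => [|m IH] p hC y hy.
  exact: (partial_rep p hE hF hU hC (goodA_0 U hE) (fun _ _ => erefl) hy).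
rewrite /= rev_rcons.
exact: (partial_rep p.2 hE hF hU hC (goodA_Psi U p.1 hE) (IH p.1 hC.1) hy).
Qed.

Lemma C0_Psi (E : TMod K) (x : E) m : cM D E ->
  cC0 D (tpow D E m) (tderk tK D E m.+1) (fun _ => True) (Psi x m).
Proof.
move=> hE; elim: m => [|m IH].
  exact: (pairf (pairf (cst (B := E) x hE hE) (idT hE)) (cst (B := KM) 0 hE cM_KM)).
have hm := cM_pow m hE. have hm1 := cM_pow m.+1 hE.
have hk := cM_derk m.+1 hE.
have f1 : cC0 D (tpow D E m.+1) (tpow D E m) (fun _ => True) (fun p => p.1) :=
  fstf hm hE (idT hm1).
have f2 : cC0 D (tpow D E m.+1) E (fun _ => True) (fun p => p.2) :=
  sndf hm hE (idT hm1).
exact: (pairf (pairf (compT f1 IH) (compT f2 (cLk m.+1 hE)))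
  (cst (B := KM) 0 hm1 cM_KM)).
Qed.

Lemma size_tpow_seq (E : TMod K) m (p : tpow D E m) : size (tpow_seq p) = m.+1.
Proof. by elim: m p => [|m IH] p //=; rewrite size_rcons IH. Qed.

Lemma map_nth_enum (T : Type) (x0 : T) (s : seq T) n :
  size s = n -> [seq nth x0 s i | i : 'I_n <- enum 'I_n] = s.
Proof.
move=> <-.
have -> : [seq nth x0 s i | i : 'I_(size s) <- enum 'I_(size s)] =
  map (nth x0 s) (map val (enum 'I_(size s))) by rewrite -map_comp.
by rewrite val_enum_ord -/(mkseq _ _) mkseq_nth.
Qed.

Lemma dk_front (E F : TMod K) (U : E -> Prop) (f : E -> F) k (x : E)
  (v : 'I_k -> E) (i : 'I_k) :
  cM D E -> cM D F -> op U -> isCk tK D U f k -> U x ->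
  exists h h1, is_der1 tK D U h h1 /\
    forall u, dk tK D U f k x (fun j => if j == i then u else v j) = h1 ((x, u), 0).
Proof.
move=> hE hF hU hC hx.
pose R := [seq v j | j <- rem i (enum 'I_k)].
have hi : i \in enum 'I_k by rewrite mem_enum.
have hperm : forall u,
    perm_eq [seq (if j == i then u else v j) | j <- enum 'I_k] (u :: R).
  move=> u.
  have := perm_map (fun j => if j == i then u else v j) (perm_to_rem hi).
  rewrite /= eqxx => hp; apply: perm_trans hp _; rewrite perm_cons.
  have -> : [seq (if j == i then u else v j) | j <- rem i (enum 'I_k)] = R.
    apply/eq_in_map => j; rewrite mem_rem_uniq ?enum_uniq // inE.
    by case/andP => hji _; rewrite (negbTE hji).
  exact: perm_refl.
have hsz : k = (size R).+1.
  by have := perm_size (hperm 0); rewrite size_map size_enum_ord.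
have hCR : isCk tK D U f (size R).+1 by rewrite -hsz.
have [A [hA hr]] := iter_rep hE hF hU hCR.1.
have hd := der_rep hE hF hU hCR hA hr.
exists (iter_partial tK D U R f), (fun p => derk tK D U f (size R).+1 ((A p.1.1, Lk (size R) p.1.2), p.2)).
split => // u.
have hCs : isCk tK D U f (size [seq (if j == i then u else v j) | j <- enum 'I_k]).
  by rewrite size_map size_enum_ord.
rewrite /dk; apply: eq_trans (perm_iter hE hF hU (hperm u) hCs hx) _.
rewrite /= /partial (der1_eq hE hd) //.
by split => //=; rewrite scale0r addr0.
Qed.

Lemma sym_dk (E F : TMod K) (U : E -> Prop) (f : E -> F) k (x : E) :
  cM D E -> cM D F -> op U -> isCk tK D U f k -> U x ->
  symmetric_map (dk tK D U f k x).
Proof.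
move=> hE hF hU hC hx s v; rewrite /dk.
have hCs : isCk tK D U f (size [seq v (s j) | j <- enum 'I_k]).
  by rewrite size_map size_enum_ord.
apply: (perm_iter hE hF hU _ hCs hx).
have -> : [seq v (s j) | j <- enum 'I_k] = map v (map s (enum 'I_k)).
  exact: (map_comp v s).
apply: (perm_map v); apply: uniq_perm.
- by rewrite map_inj_uniq ?enum_uniq //; exact: perm_inj.
- exact: enum_uniq.
- move=> j; rewrite mem_enum; apply/mapP; exists (s^-1 j)%g.
    by rewrite mem_enum.
  by rewrite permKV.
Qed.

Lemma lin_dk (E F : TMod K) (U : E -> Prop) (f : E -> F) k (x : E) :
  cM D E -> cM D F -> op U -> isCk tK D U f k -> U x ->
  multilinear_map (dk tK D U f k x).
Proof.
move=> hE hF hU hC hx v i a w w'.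
have [h [h1 [hd hf]]] := dk_front v i hE hF hU hC hx.
rewrite !hf; exact: (lin a w w' hE hF hU hd hx).
Qed.

Lemma cont_dk (E F : TMod K) (U : E -> Prop) (f : E -> F) m (x : E) :
  cM D E -> cM D F -> op U -> isCk tK D U f m.+1 -> U x ->
  cC0 D (tpow D E m) F (fun _ => True) (fun p => dk tK D U f m.+1 x (tpow_tuple p)).
Proof.
move=> hE hF hU hC hx.
have hc := C0_Psi x m hE.
have hd := (der1_spec hC.2.2).1.
have k1 := comp_pre hc hd.
have k2 : cC0 D (tpow D E m) F (fun _ => True)
    (fun p => der1 tK D (sderk tK D U m) (derk tK D U f m) (Psi x m p)).
  apply: set_eq k1 => p; split => // _.
  by case: (goodA_Psi U p hE) => _ _ /(_ x hx).
apply: (c0_ext HD k2) => p _.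
rewrite /dk /tpow_tuple (map_nth_enum _ (size_tpow_seq p)).
have hp : perm_eq (tpow_seq p) (rev (tpow_seq p)) by rewrite perm_sym perm_rev.
have hs : isCk tK D U f (size (tpow_seq p)) by rewrite size_tpow_seq.
rewrite (perm_iter hE hF hU hp hs hx).
by rewrite (@rep_Psi E F U f m p hE hF hU hC x hx).
Qed.

End Dev.

Unset Implicit Arguments.
Set Strict Implicit.

Theorem lemma4p8 (K : comUnitRingType) (tK : Top K) (D : C0Data K)
  (HD : C0Concept tK D) (E F : TMod K) (HE : cM D E) (HF : cM D F)
  (U : E -> Prop) (HU : op U) (n : natinf) (f : E -> F)
  (Hf : isCn tK D U f n) (k : nat) (hk : le_natinf k n) (x : E) (hx : U x) :
  multilinear_map (dk tK D U f k x) /\ symmetric_map (dk tK D U f k x) /\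
  (forall m : nat, k = m.+1 ->
     cC0 D (tpow D E m) F (fun _ => True)
       (fun p => dk tK D U f m.+1 x (tpow_tuple p))).
Proof.
have hCk : isCk tK D U f k.
  case: n Hf hk => [m|] Hf hk /=; [exact: isCk_mono hk Hf | exact: Hf].
split; [|split].
- exact (lin_dk HD HE HF HU hCk hx).
- exact (sym_dk HD HE HF HU hCk hx).
- move=> m hm; subst k; exact (cont_dk HD HE HF HU hCk hx).
Qed.
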